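(* For all $0<x<\pi/2$, \[ \frac{\frac{2\pi^4}{3}x^3+\left(\frac{8\pi^4}{15}-\frac{16\pi^2}{3}\right)x^5}{(\pi^2-4x^2)^2}<x\sec^2x-\tan x<\frac{\frac{2\pi^4}{3}x^3+\left(\frac{256}{\pi^2}-\frac{8\pi^2}{3}\right)x^5}{(\pi^2-4x^2)^2}, \] and the constants $\frac{8\pi^4}{15}-\frac{16\pi^2}{3}$ and $\frac{256}{\pi^2}-\frac{8\pi^2}{3}$ are the best possible. *)

(* Defs.v *)
From Stdlib Require Import Reals.
Open Scope R_scope.

Definition fsec (x : R) : R := x * (1 / (cos x) ^ 2) - tan x.

Definition bnd (c x : R) : R :=
  (2 * PI ^ 4 / 3 * x ^ 3 + c * x ^ 5) / (PI ^ 2 - 4 * x ^ 2) ^ 2.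

Definition c_low : R := 8 * PI ^ 4 / 15 - 16 * PI ^ 2 / 3.
Definition c_up  : R := 256 / PI ^ 2 - 8 * PI ^ 2 / 3.

(* Main.v *)
Require Import Defs.
From Stdlib Require Import Reals QArith Qreals Lra Lia List.
Open Scope R_scope.
Ltac cs := simpl.

Arguments Q2R : simpl never.
Arguments Qred : simpl never.
Arguments Qplus : simpl never.
Arguments Qmult : simpl never.
Lemma Q2R0 : Q2R 0 = 0.
Proof. unfold Q2R; simpl; ring. Qed.
Lemma Q2R1 : Q2R 1 = 1.
Proof. unfold Q2R; simpl; field. Qed.
Lemma Q2R_red q : Q2R (Qred q) = Q2R q.
Proof. apply Qeq_eqR, Qred_correct. Qed.

Fixpoint ev1 (l : list Q) (x : R) : R :=
  match l with nil => 0 | c :: l' => Q2R c + x * ev1 l' x end.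

Fixpoint add1 (l m : list Q) : list Q :=
  match l, m with
  | nil, _ => m
  | _, nil => l
  | a :: l', b :: m' => Qred (a + b)%Q :: add1 l' m'
  end.

Lemma ev1_add l m x : ev1 (add1 l m) x = ev1 l x + ev1 m x.
Proof.
  revert m; induction l as [|a l IH]; intros m; cs; [lra|].
  destruct m as [|b m]; cs; [lra|].
  rewrite IH, Q2R_red, Q2R_plus; ring.
Qed.
Arguments add1 : simpl never.

Definition sc1 (a : Q) (l : list Q) := map (fun c => Qred (a * c)%Q) l.

Lemma ev1_sc a l x : ev1 (sc1 a l) x = Q2R a * ev1 l x.
Proof.
  induction l as [|c l IH]; cs; [ring|].
  rewrite IH, Q2R_red, Q2R_mult; ring.
Qed.
Arguments sc1 : simpl never.

Fixpoint mul1 (l m : list Q) : list Q :=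
  match l with nil => nil | a :: l' => add1 (sc1 a m) (0%Q :: mul1 l' m) end.

Lemma ev1_mul l m x : ev1 (mul1 l m) x = ev1 l x * ev1 m x.
Proof.
  induction l as [|a l IH]; cs; [ring|].
  rewrite ev1_add, ev1_sc; cs; rewrite IH.
  unfold Q2R at 2; simpl; field.
Qed.
Arguments mul1 : simpl never.

Fixpoint comp1 (l s : list Q) : list Q :=
  match l with nil => nil | c :: l' => add1 (c :: nil) (mul1 s (comp1 l' s)) end.

Lemma ev1_comp l s x : ev1 (comp1 l s) x = ev1 l (ev1 s x).
Proof.
  induction l as [|c l IH]; cs; [ring|].
  rewrite ev1_add, ev1_mul, IH; cs; ring.
Qed.
Arguments comp1 : simpl never.

Definition poly2 := list (list Q).

Fixpoint ev2 (L : poly2) (u v : R) : R :=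
  match L with nil => 0 | c :: L' => ev1 c v + u * ev2 L' u v end.

Fixpoint add2 (L M : poly2) : poly2 :=
  match L, M with
  | nil, _ => M
  | _, nil => L
  | a :: L', b :: M' => add1 a b :: add2 L' M'
  end.

Lemma ev2_add L M u v : ev2 (add2 L M) u v = ev2 L u v + ev2 M u v.
Proof.
  revert M; induction L as [|a L IH]; intros M; cs; [lra|].
  destruct M as [|b M]; cs; [lra|].
  rewrite IH, ev1_add; ring.
Qed.
Arguments add2 : simpl never.

Definition sc2 (c : list Q) (L : poly2) := map (mul1 c) L.

Lemma ev2_sc c L u v : ev2 (sc2 c L) u v = ev1 c v * ev2 L u v.
Proof.
  induction L as [|a L IH]; cs; [ring|].
  rewrite IH, ev1_mul; ring.
Qed.
Arguments sc2 : simpl never.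

Fixpoint mul2 (L M : poly2) : poly2 :=
  match L with nil => nil | c :: L' => add2 (sc2 c M) (nil :: mul2 L' M) end.

Lemma ev2_mul L M u v : ev2 (mul2 L M) u v = ev2 L u v * ev2 M u v.
Proof.
  induction L as [|a L IH]; cs; [ring|].
  rewrite ev2_add, ev2_sc; cs; rewrite IH; ring.
Qed.
Arguments mul2 : simpl never.

Definition sub2 (L M : poly2) := add2 L (sc2 ((-1)%Q :: nil) M).

Lemma ev2_sub L M u v : ev2 (sub2 L M) u v = ev2 L u v - ev2 M u v.
Proof.
  unfold sub2; rewrite ev2_add, ev2_sc; cs.
  unfold Q2R; simpl; field.
Qed.

Fixpoint pow2 (L : poly2) (n : nat) : poly2 :=
  match n with O => ((1%Q :: nil) :: nil) | S m => mul2 L (pow2 L m) end.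

Lemma ev2_pow L n u v : ev2 (pow2 L n) u v = (ev2 L u v) ^ n.
Proof.
  induction n as [|n IH]; cs.
  - unfold Q2R; simpl; field.
  - rewrite ev2_mul, IH; ring.
Qed.
Arguments pow2 : simpl never.

Fixpoint comp2 (L S : poly2) : poly2 :=
  match L with nil => nil | c :: L' => add2 (c :: nil) (mul2 S (comp2 L' S)) end.

Lemma ev2_comp L S u v : ev2 (comp2 L S) u v = ev2 L (ev2 S u v) v.
Proof.
  induction L as [|c L IH]; cs; [ring|].
  rewrite ev2_add, ev2_mul, IH; cs; ring.
Qed.
Arguments comp2 : simpl never.

Definition shiftv (L : poly2) (b : Q) := map (fun c => comp1 c (b :: 1%Q :: nil)) L.

Lemma ev2_shiftv L b u w : ev2 (shiftv L b) u w = ev2 L u (Q2R b + w).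
Proof.
  induction L as [|c L IH]; cs; [ring|].
  rewrite IH, ev1_comp; cs. f_equal. f_equal. unfold Q2R at 2; simpl; field.
Qed.

Definition shiftu (L : poly2) (a : Q) := comp2 L ((a :: nil) :: (1%Q :: nil) :: nil).

Lemma ev2_shiftu L a u v : ev2 (shiftu L a) u v = ev2 L (Q2R a + u) v.
Proof.
  unfold shiftu; rewrite ev2_comp; f_equal; cs. unfold Q2R at 2; simpl; field.
Qed.

Definition cst (q : Q) : poly2 := (q :: nil) :: nil.
Definition Xu : poly2 := nil :: (1%Q :: nil) :: nil.
Definition Pv : poly2 := (0%Q :: 1%Q :: nil) :: nil.

Lemma ev2_cst q u v : ev2 (cst q) u v = Q2R q.
Proof. cs; ring. Qed.
Lemma ev2_Xu u v : ev2 Xu u v = u.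
Proof. cs. unfold Q2R; simpl; field. Qed.
Lemma ev2_Pv u v : ev2 Pv u v = v.
Proof. cs. unfold Q2R; simpl; field. Qed.

Definition iszero1 (l : list Q) := forallb (fun c => Qeq_bool c 0) l.

Lemma iszero1_ok l x : iszero1 l = true -> ev1 l x = 0.
Proof.
  induction l as [|c l IH]; cs; [auto|].
  intros H; apply andb_true_iff in H as [H1 H2].
  rewrite IH by auto. apply Qeq_bool_eq in H1. rewrite (Qeq_eqR _ _ H1).
  unfold Q2R; simpl; ring.
Qed.

Lemma drop_ok k L u v :
  forallb iszero1 (firstn k L) = true -> ev2 L u v = u ^ k * ev2 (skipn k L) u v.
Proof.
  revert L; induction k as [|k IH]; intros L H; cs; [ring|].
  destruct L as [|c L]; cs; [ring|].
  simpl in H; apply andb_true_iff in H as [H1 H2].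
  rewrite iszero1_ok by auto. rewrite (IH L H2). ring.
Qed.

Definition qneg (c : Q) : Q := if Qle_bool 0 c then 0%Q else c.

Lemma qneg_le c : Q2R (qneg c) <= 0 /\ Q2R (qneg c) <= Q2R c.
Proof.
  unfold qneg; destruct (Qle_bool 0 c) eqn:E.
  - apply Qle_bool_iff in E. apply Qle_Rle in E. unfold Q2R in *; simpl in *; lra.
  - split; [|lra]. assert (~ (0 <= c)%Q) as H. { intro H; apply Qle_bool_iff in H; congruence. }
    apply Qnot_le_lt in H. apply Qlt_Rlt in H. rewrite Q2R0 in H; lra.
Qed.

Fixpoint negp (l : list Q) (e : Q) : Q :=
  match l with nil => 0%Q | c :: l' => Qred (qneg c + e * negp l' e)%Q end.

Lemma negp_le0 l e : 0 <= Q2R e -> Q2R (negp l e) <= 0.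
Proof.
  intros He; induction l as [|c l IH]; cs.
  - unfold Q2R; simpl; lra.
  - rewrite Q2R_red, Q2R_plus, Q2R_mult. destruct (qneg_le c). nra.
Qed.

Lemma negp_ok l e x : 0 <= x <= Q2R e -> Q2R (negp l e) <= ev1 l x.
Proof.
  intros Hx; induction l as [|c l IH]; cs.
  - unfold Q2R; simpl; lra.
  - rewrite Q2R_red, Q2R_plus, Q2R_mult. destruct (qneg_le c).
    pose proof (negp_le0 l e ltac:(lra)). nra.
Qed.

Definition critp (l : list Q) (e : Q) : Q :=
  match l with nil => 0%Q | c :: l' => Qred (c + e * negp l' e)%Q end.

Lemma critp_ok l e x : 0 <= x <= Q2R e -> Q2R (critp l e) <= ev1 l x.
Proof.
  intros Hx; destruct l as [|c l]; cs.
  - unfold Q2R; simpl; lra.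
  - rewrite Q2R_red, Q2R_plus, Q2R_mult.
    pose proof (negp_le0 l e ltac:(lra)). pose proof (negp_ok l e x Hx). nra.
Qed.

Fixpoint negb2 (L : poly2) (d e : Q) : Q :=
  match L with nil => 0%Q | c :: L' => Qred (negp c e + d * negb2 L' d e)%Q end.

Lemma negb2_le0 L d e : 0 <= Q2R d -> 0 <= Q2R e -> Q2R (negb2 L d e) <= 0.
Proof.
  intros Hd He; induction L as [|c L IH]; cs.
  - unfold Q2R; simpl; lra.
  - rewrite Q2R_red, Q2R_plus, Q2R_mult. pose proof (negp_le0 c e He). nra.
Qed.

Lemma negb2_ok L d e u v : 0 <= u <= Q2R d -> 0 <= v <= Q2R e ->
  Q2R (negb2 L d e) <= ev2 L u v.
Proof.
  intros Hu Hv; induction L as [|c L IH]; cs.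
  - unfold Q2R; simpl; lra.
  - rewrite Q2R_red, Q2R_plus, Q2R_mult. pose proof (negp_ok c e v Hv).
    pose proof (negb2_le0 L d e ltac:(lra) ltac:(lra)). nra.
Qed.

Definition crit (L : poly2) (d e : Q) : Q :=
  match L with nil => 0%Q | c :: L' => Qred (critp c e + d * negb2 L' d e)%Q end.

Lemma crit_ok L d e u v : 0 <= u <= Q2R d -> 0 <= v <= Q2R e ->
  Q2R (crit L d e) <= ev2 L u v.
Proof.
  intros Hu Hv; destruct L as [|c L]; cs.
  - unfold Q2R; simpl; lra.
  - rewrite Q2R_red, Q2R_plus, Q2R_mult. pose proof (critp_ok c e v Hv).
    pose proof (negb2_ok L d e u v Hu Hv).
    pose proof (negb2_le0 L d e ltac:(lra) ltac:(lra)). nra.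
Qed.

Definition qpos (x : Q) : bool := negb (Qle_bool x 0).

Lemma qpos_ok x : qpos x = true -> 0 < Q2R x.
Proof.
  unfold qpos; intros H. destruct (Qle_bool x 0) eqn:E; [discriminate|].
  assert (~ (x <= 0)%Q) as H1. { intro H1; apply Qle_bool_iff in H1; congruence. }
  apply Qnot_le_lt, Qlt_Rlt in H1. rewrite Q2R0 in H1; lra.
Qed.

Fixpoint chk_boxes (L : poly2) (plo e : Q) (a : Q) (xs : list Q) : bool :=
  match xs with
  | nil => false
  | b :: xs' => qpos (crit (shiftv (shiftu L a) plo) (b - a) e) &&
      match xs' with nil => true | _ => chk_boxes L plo e b xs' end
  end.

Lemma last_indep {A} (x : A) l d d' : last (x :: l) d = last (x :: l) d'.
Proof.
  revert x; induction l as [|y l IH]; intros x; [reflexivity|].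
  change (last (y :: l) d = last (y :: l) d'). apply IH.
Qed.

Lemma chk_boxes_ok L plo e a xs u p :
  chk_boxes L plo e a xs = true -> Q2R plo <= p <= Q2R plo + Q2R e ->
  Q2R a <= u <= Q2R (last xs a) -> 0 < ev2 L u p.
Proof.
  revert a; induction xs as [|b xs IH]; intros a H Hp Hu.
  - discriminate.
  - change (chk_boxes L plo e a (b :: xs)) with (qpos (crit (shiftv (shiftu L a) plo) (b - a) e) &&
      match xs with nil => true | _ => chk_boxes L plo e b xs end) in H.
    apply andb_true_iff in H as [H1 H2].
    destruct (Rle_dec u (Q2R b)) as [Hub|Hub].
    + apply qpos_ok in H1.
      replace u with (Q2R a + (u - Q2R a)) by ring.
      replace p with (Q2R plo + (p - Q2R plo)) by ring.
      rewrite <- ev2_shiftu, <- ev2_shiftv.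
      eapply Rlt_le_trans; [exact H1|]. apply crit_ok; [|lra].
      rewrite Q2R_minus. lra.
    + destruct xs as [|b' xs]; [simpl in Hu; lra|].
      apply (IH b); auto. split; [lra|].
      rewrite (last_indep b' xs b a). exact (proj2 Hu).
Qed.

Definition chkpos (L : poly2) (plo e : Q) (xs : list Q) : bool :=
  chk_boxes L plo e 0 xs.

Lemma chkpos_ok L plo e xs u p :
  chkpos L plo e xs = true -> Q2R plo <= p <= Q2R plo + Q2R e ->
  0 <= u <= Q2R (last xs 0%Q) -> 0 < ev2 L u p.
Proof.
  intros H Hp Hu. eapply chk_boxes_ok; eauto. rewrite Q2R0; lra.
Qed.

Fixpoint evq1 (l : list Q) (x : Q) : Q :=
  match l with nil => 0%Q | c :: l' => Qred (c + x * evq1 l' x)%Q end.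
Fixpoint evq2 (L : poly2) (u v : Q) : Q :=
  match L with nil => 0%Q | c :: L' => Qred (evq1 c v + u * evq2 L' u v)%Q end.
Lemma evq1_ok l x : Q2R (evq1 l x) = ev1 l (Q2R x).
Proof. induction l; cs; [unfold Q2R; simpl; ring|]. rewrite Q2R_red, Q2R_plus, Q2R_mult, IHl; ring. Qed.
Lemma evq2_ok L u v : Q2R (evq2 L u v) = ev2 L (Q2R u) (Q2R v).
Proof. induction L; cs; [unfold Q2R; simpl; ring|]. rewrite Q2R_red, Q2R_plus, Q2R_mult, IHL, evq1_ok; ring. Qed.

Fixpoint zfact (n : nat) : Z :=
  match n with O => 1%Z | S m => (Z.of_nat (S m) * zfact m)%Z end.

Lemma zfact_pos n : (0 < zfact n)%Z.
Proof. induction n; [simpl; lia|]. change (0 < Z.of_nat (S n) * zfact n)%Z. apply Z.mul_pos_pos; lia. Qed.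

Lemma IZR_zfact n : IZR (zfact n) = INR (Factorial.fact n).
Proof.
  induction n; [reflexivity|]. change (IZR (Z.of_nat (S n) * zfact n) = INR (Factorial.fact (S n))).
  rewrite mult_IZR, IHn. change (Factorial.fact (S n)) with (S n * Factorial.fact n)%nat. rewrite mult_INR, (INR_IZR_INZ (S n)). reflexivity.
Qed.

Definition mono (k : nat) (c : Q) : poly2 := repeat nil k ++ ((c :: nil) :: nil).

Lemma ev2_mono k c u v : ev2 (mono k c) u v = Q2R c * u ^ k.
Proof. unfold mono; induction k; simpl; [ring|]. rewrite IHk; ring. Qed.

Definition tcoef (i k : nat) : Q := Qmake ((-1) ^ Z.of_nat i)%Z (Z.to_pos (zfact k)).

Lemma tcoef_ok i k : Q2R (tcoef i k) = (-1) ^ i / INR (Factorial.fact k).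
Proof.
  unfold tcoef, Q2R; cs. rewrite Z2Pos.id by apply zfact_pos.
  rewrite <- pow_IZR, IZR_zfact. reflexivity.
Qed.

Fixpoint sinpoly (n : nat) : poly2 :=
  match n with
  | O => mono 1 (tcoef 0 1)
  | S m => add2 (sinpoly m) (mono (2 * n + 1) (tcoef n (2 * n + 1)))
  end.

Fixpoint cospoly (n : nat) : poly2 :=
  match n with
  | O => mono 0 (tcoef 0 0)
  | S m => add2 (cospoly m) (mono (2 * n) (tcoef n (2 * n)))
  end.

Lemma ev2_sinpoly n u v : ev2 (sinpoly n) u v = sin_approx u n.
Proof.
  induction n as [|n IH].
  - simpl sinpoly. rewrite ev2_mono, tcoef_ok. unfold sin_approx, sin_term; cs. field.
  - change (sinpoly (S n)) with (add2 (sinpoly n) (mono (2 * S n + 1) (tcoef (S n) (2 * S n + 1)))).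
    rewrite ev2_add, IH, ev2_mono, tcoef_ok. unfold sin_approx; simpl sum_f_R0 at 2.
    unfold sin_term. field. apply not_0_INR, Factorial.fact_neq_0.
Qed.

Lemma ev2_cospoly n u v : ev2 (cospoly n) u v = cos_approx u n.
Proof.
  induction n as [|n IH].
  - simpl cospoly. rewrite ev2_mono, tcoef_ok. unfold cos_approx, cos_term; cs. field.
  - change (cospoly (S n)) with (add2 (cospoly n) (mono (2 * S n) (tcoef (S n) (2 * S n)))).
    rewrite ev2_add, IH, ev2_mono, tcoef_ok. unfold cos_approx; simpl sum_f_R0 at 2.
    unfold cos_term. field. apply not_0_INR, Factorial.fact_neq_0.
Qed.

Definition sinU := sinpoly 6. Definition sinL := sinpoly 5.
Definition cosU := cospoly 6. Definition cosL := cospoly 5.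
Definition p2t2 := sub2 (pow2 Pv 2) (pow2 Xu 2).
Definition cLq := sub2 (mul2 (cst (8#15)) (pow2 Pv 4)) (mul2 (cst (16#3)) (pow2 Pv 2)).
Definition PLq := add2 (mul2 (cst (1#12)) (mul2 (pow2 Pv 4) (pow2 Xu 3))) (mul2 (cst (1#32)) (mul2 cLq (pow2 Xu 5))).
Definition cUp2 := sub2 (cst 256) (mul2 (cst (8#3)) (pow2 Pv 4)).
Definition PU2 := add2 (mul2 (cst (1#12)) (mul2 (pow2 Pv 6) (pow2 Xu 3))) (mul2 (cst (1#32)) (mul2 cUp2 (pow2 Xu 5))).
Definition QAL_full := sub2 (mul2 (pow2 p2t2 2) (sub2 Xu sinU)) (mul2 (add2 (cst 1) cosU) PLq).
Definition QAU_full := sub2 (mul2 (add2 (cst 1) cosL) PU2) (mul2 (pow2 Pv 2) (mul2 (pow2 p2t2 2) (sub2 Xu sinL))).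
Definition QALp_full := sub2 (mul2 (pow2 p2t2 2) (sub2 Xu sinL)) (mul2 (add2 (cst 1) cosL) PLq).
Definition Tms := sub2 Pv Xu.
Definition PLs := comp2 PLq Tms.
Definition PU2s := comp2 PU2 Tms.
Definition twops := pow2 (sub2 (mul2 (cst 2) Pv) Xu) 2.
Definition omcL := sub2 (cst 1) cosL.
Definition omcU := sub2 (cst 1) cosU.
Definition QBL := sub2 (mul2 twops (sub2 (sub2 Pv Xu) sinU)) (mul2 (skipn 2 omcL) PLs).
Definition QBU_full := sub2 (mul2 (skipn 2 omcU) PU2s) (mul2 (pow2 Pv 2) (mul2 twops (sub2 (sub2 Pv Xu) sinL))).
Definition QBUp_full := sub2 (mul2 (skipn 2 omcL) PU2s) (mul2 (pow2 Pv 2) (mul2 twops (sub2 (sub2 Pv Xu) sinU))).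

Definition plo : Q := 314159 # 100000.
Definition eps : Q := 1 # 100000.


Lemma PI_lo : Q2R plo <= PI.
Proof.
  set (a := 314159 # 400000).
  assert (Ha : Q2R a = 314159 / 400000) by (unfold a, Q2R; simpl; reflexivity).
  assert (Hs : sin (Q2R a) <= sin_approx (Q2R a) (2 * (2 + 1))).
  { apply sin_bound; pose proof PI2_1; rewrite Ha; lra. }
  assert (Hs0 : 0 <= sin (Q2R a)).
  { apply sin_ge_0; pose proof PI2_1; rewrite Ha; lra. }
  assert (Hv : sin_approx (Q2R a) (2 * (2 + 1)) = Q2R (evq2 sinU a 0)).
  { rewrite evq2_ok, Q2R0. unfold sinU. rewrite ev2_sinpoly. reflexivity. }
  assert (Hq : (0 < 1 - 2 * evq2 sinU a 0 * evq2 sinU a 0)%Q).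
  { apply QMicromega.Qlt_bool_iff. vm_compute. reflexivity. }
  apply Qlt_Rlt in Hq. rewrite Q2R_minus, !Q2R_mult, Q2R0, Q2R1 in Hq.
  replace (Q2R 2) with 2 in Hq by (unfold Q2R; simpl; field).
  rewrite <- Hv in Hq.
  assert (Hc : 0 < cos (2 * Q2R a)).
  { rewrite cos_2a_sin. nra. }
  assert (H2 := PI2_lower_bound (2 * Q2R a) ltac:(rewrite Ha; lra) Hc).
  unfold plo, Q2R; simpl. rewrite Ha in H2. lra.
Qed.

Lemma PI_hi : PI <= Q2R plo + Q2R eps.
Proof.
  set (b := 19635 # 12500).
  assert (Hb : Q2R b = 19635 / 12500) by (unfold b, Q2R; simpl; reflexivity).
  assert (Hpe : Q2R plo + Q2R eps = 2 * Q2R b) by (rewrite Hb; unfold plo, eps, Q2R; simpl; field).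
  rewrite Hpe. destruct (Rle_dec PI (2 * Q2R b)) as [H|H]; [exact H|exfalso].
  assert (Hc : cos (Q2R b) <= cos_approx (Q2R b) (2 * (2 + 1))).
  { apply cos_bound; pose proof PI2_1; rewrite Hb in *; lra. }
  assert (Hc0 : 0 <= cos (Q2R b)).
  { apply cos_ge_0; pose proof PI2_1; rewrite Hb in *; lra. }
  assert (Hv : cos_approx (Q2R b) (2 * (2 + 1)) = Q2R (evq2 cosU b 0)).
  { rewrite evq2_ok, Q2R0. unfold cosU. rewrite ev2_cospoly. reflexivity. }
  assert (Hq : (evq2 cosU b 0 < 0)%Q).
  { apply QMicromega.Qlt_bool_iff. vm_compute. reflexivity. }
  apply Qlt_Rlt in Hq. rewrite Q2R0 in Hq. lra.
Qed.

Lemma Q2R_mk n d : Q2R (Qmake n d) = IZR n / IZR (Zpos d).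
Proof. reflexivity. Qed.

Ltac evp := repeat (rewrite ?ev2_sub, ?ev2_add, ?ev2_mul, ?ev2_pow, ?ev2_cst, ?ev2_Xu, ?ev2_Pv, ?ev2_comp, ?ev2_sinpoly, ?ev2_cospoly); rewrite ?Q2R_mk.

Lemma ev_PL t p : ev2 PLq t p = p^4*t^3/12 + (8*p^4/15 - 16*p^2/3)*t^5/32.
Proof. unfold PLq, cLq. evp. field. Qed.
Lemma ev_PU2 t p : ev2 PU2 t p = p^6*t^3/12 + (256 - 8*p^4/3)*t^5/32.
Proof. unfold PU2, cUp2. evp. field. Qed.
Lemma ev_QAL t p : ev2 QAL_full t p = t^7 * ev2 (skipn 7 QAL_full) t p /\
  ev2 QAL_full t p = (p^2 - t^2)^2 * (t - sin_approx t 6) - (1 + cos_approx t 6) * ev2 PLq t p.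
Proof. split; [apply drop_ok; vm_compute; reflexivity|]. unfold QAL_full, p2t2, sinU, cosU. evp. field. Qed.
Lemma ev_QALp t p : ev2 QALp_full t p = t^7 * ev2 (skipn 7 QALp_full) t p /\
  ev2 QALp_full t p = (p^2 - t^2)^2 * (t - sin_approx t 5) - (1 + cos_approx t 5) * ev2 PLq t p.
Proof. split; [apply drop_ok; vm_compute; reflexivity|]. unfold QALp_full, p2t2, sinL, cosL. evp. field. Qed.
Lemma ev_QAU t p : ev2 QAU_full t p = t^5 * ev2 (skipn 5 QAU_full) t p /\
  ev2 QAU_full t p = (1 + cos_approx t 5) * ev2 PU2 t p - p^2 * ((p^2 - t^2)^2 * (t - sin_approx t 5)).
Proof. split; [apply drop_ok; vm_compute; reflexivity|]. unfold QAU_full, p2t2, sinL, cosL. evp. field. Qed.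
Lemma ev_omcL s p : 1 - cos_approx s 5 = s^2 * ev2 (skipn 2 omcL) s p.
Proof. rewrite <- drop_ok by (vm_compute; reflexivity). unfold omcL, cosL. evp. field. Qed.
Lemma ev_omcU s p : 1 - cos_approx s 6 = s^2 * ev2 (skipn 2 omcU) s p.
Proof. rewrite <- drop_ok by (vm_compute; reflexivity). unfold omcU, cosU. evp. field. Qed.
Lemma ev_PLs s p : ev2 PLs s p = ev2 PLq (p - s) p.
Proof. unfold PLs, Tms. rewrite ev2_comp. f_equal. evp. ring. Qed.
Lemma ev_PU2s s p : ev2 PU2s s p = ev2 PU2 (p - s) p.
Proof. unfold PU2s, Tms. rewrite ev2_comp. f_equal. evp. ring. Qed.
Lemma ev_QBL s p : ev2 QBL s p = (2*p - s)^2 * (p - s - sin_approx s 6) - ev2 (skipn 2 omcL) s p * ev2 PLq (p - s) p.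
Proof. unfold QBL, twops, sinU. rewrite <- ev_PLs. evp. field. Qed.
Lemma ev_QBU s p : ev2 QBU_full s p = s * ev2 (skipn 1 QBU_full) s p /\
  ev2 QBU_full s p = ev2 (skipn 2 omcU) s p * ev2 PU2 (p - s) p - p^2 * ((2*p - s)^2 * (p - s - sin_approx s 5)).
Proof. split; [rewrite (drop_ok 1) by (vm_compute; reflexivity); ring|].
  unfold QBU_full, twops, sinL. rewrite <- ev_PU2s. evp. field. Qed.
Lemma ev_QBUp s p : ev2 QBUp_full s p = s * ev2 (skipn 1 QBUp_full) s p /\
  ev2 QBUp_full s p = ev2 (skipn 2 omcL) s p * ev2 PU2 (p - s) p - p^2 * ((2*p - s)^2 * (p - s - sin_approx s 6)).
Proof. split; [rewrite (drop_ok 1) by (vm_compute; reflexivity); ring|].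
  unfold QBUp_full, twops, sinU. rewrite <- ev_PU2s. evp. field. Qed.

Lemma PIb : 314159/100000 <= PI <= 314160/100000.
Proof.
  pose proof PI_lo; pose proof PI_hi. unfold plo, eps in *. rewrite !Q2R_mk in *. lra.
Qed.

Ltac chkp := apply chkpos_ok with (plo := plo) (e := eps);
  [vm_cast_no_check (eq_refl true) | pose proof PI_lo; pose proof PI_hi; lra | cbn [last]; rewrite ?Q2R_mk; lra].

Lemma pos_QAL t : 0 <= t <= 16/10 -> 0 < ev2 (skipn 7 QAL_full) t PI.
Proof. intros; apply chkpos_ok with (plo := plo) (e := eps) (xs := (16#10)::nil);
  [vm_cast_no_check (eq_refl true) | pose proof PI_lo; pose proof PI_hi; lra | cbn [last]; rewrite ?Q2R_mk; lra]. Qed.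
Lemma pos_QAU t : 0 <= t <= 16/10 -> 0 < ev2 (skipn 5 QAU_full) t PI.
Proof. intros; apply chkpos_ok with (plo := plo) (e := eps) (xs := (16#10)::nil);
  [vm_cast_no_check (eq_refl true) | pose proof PI_lo; pose proof PI_hi; lra | cbn [last]; rewrite ?Q2R_mk; lra]. Qed.
Lemma pos_QBL t : 0 <= t <= 16/10 -> 0 < ev2 QBL t PI.
Proof. intros; apply chkpos_ok with (plo := plo) (e := eps) (xs := (2#10)::(4#10)::(6#10)::(8#10)::(10#10)::(12#10)::(14#10)::(16#10)::nil);
  [vm_cast_no_check (eq_refl true) | pose proof PI_lo; pose proof PI_hi; lra | cbn [last]; rewrite ?Q2R_mk; lra]. Qed.
Lemma pos_QBU t : 0 <= t <= 16/10 -> 0 < ev2 (skipn 1 QBU_full) t PI.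
Proof. intros; apply chkpos_ok with (plo := plo) (e := eps) (xs := (4#10)::(8#10)::(1#1)::(12#10)::(14#10)::(16#10)::nil);
  [vm_cast_no_check (eq_refl true) | pose proof PI_lo; pose proof PI_hi; lra | cbn [last]; rewrite ?Q2R_mk; lra]. Qed.
Lemma pos_QALp t : 0 <= t <= 1 -> 0 < ev2 (sub2 (cst 1) (skipn 7 QALp_full)) t PI.
Proof. intros; apply chkpos_ok with (plo := plo) (e := eps) (xs := (1#1)::nil);
  [vm_cast_no_check (eq_refl true) | pose proof PI_lo; pose proof PI_hi; lra | cbn [last]; rewrite ?Q2R_mk; lra]. Qed.
Lemma pos_QBUp t : 0 <= t <= 1 -> 0 < ev2 (sub2 (cst 12) (skipn 1 QBUp_full)) t PI.
Proof. intros; apply chkpos_ok with (plo := plo) (e := eps) (xs := (1#16)::(1#8)::(1#4)::(1#2)::(1#1)::nil);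
  [vm_cast_no_check (eq_refl true) | pose proof PI_lo; pose proof PI_hi; lra | cbn [last]; rewrite ?Q2R_mk; lra]. Qed.

Lemma sinb t : 0 <= t <= PI -> sin_approx t 5 <= sin t <= sin_approx t 6.
Proof. intros H. pose proof (sin_bound t 2 (proj1 H) (proj2 H)) as Hs. exact Hs. Qed.
Lemma cosb t : -PI/2 <= t <= PI/2 -> cos_approx t 5 <= cos t <= cos_approx t 6.
Proof. intros H. pose proof (cos_bound t 2 (proj1 H) (proj2 H)) as Hs. exact Hs. Qed.

Lemma PL_nonneg t : 0 <= t <= PI -> 0 <= ev2 PLq t PI.
Proof.
  intros Ht. pose proof PIb. rewrite ev_PL.
  replace (PI ^ 4 * t ^ 3 / 12 + (8 * PI ^ 4 / 15 - 16 * PI ^ 2 / 3) * t ^ 5 / 32)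
    with (t^3 * (PI^2 * (5*PI^2 + t^2*(PI^2 - 10)) / 60)) by field.
  apply Rmult_le_pos; [apply pow_le; lra|].
  assert (t^2 <= PI^2) by nra. assert (9 <= PI^2) by nra.
  assert (0 <= 5*PI^2 + t^2*(PI^2 - 10)) by nra.
  apply Rmult_le_pos; [|lra]. apply Rmult_le_pos; nra.
Qed.

Lemma PU2_nonneg t : 0 <= t <= PI -> 0 <= ev2 PU2 t PI.
Proof.
  intros Ht. pose proof PIb. rewrite ev_PU2.
  replace (PI ^ 6 * t ^ 3 / 12 + (256 - 8 * PI ^ 4 / 3) * t ^ 5 / 32)
    with (t^3 * (PI^4 * (PI^2 - t^2) / 12 + 8 * t^2)) by field.
  apply Rmult_le_pos; [apply pow_le; lra|].
  assert (t^2 <= PI^2) by nra. assert (0 <= PI^4) by (apply pow_le; lra).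
  assert (0 <= PI^4 * (PI^2 - t^2)) by (apply Rmult_le_pos; lra). nra.
Qed.

Lemma regA_low t : 0 < t <= PI/2 ->
  0 < (PI^2 - t^2)^2 * (t - sin t) - (1 + cos t) * ev2 PLq t PI.
Proof.
  intros Ht. pose proof PIb. destruct (ev_QAL t PI) as [E1 E2].
  assert (HQ := pos_QAL t ltac:(lra)).
  assert (0 < t^7) by (apply pow_lt; lra).
  assert (HE : 0 < ev2 QAL_full t PI) by (rewrite E1; apply Rmult_lt_0_compat; lra).
  rewrite E2 in HE.
  pose proof (sinb t ltac:(lra)). pose proof (cosb t ltac:(lra)).
  pose proof (PL_nonneg t ltac:(lra)).
  set (D := (PI^2 - t^2)^2) in *. set (PL := ev2 PLq t PI) in *.
  assert (0 <= D) by (unfold D; apply pow2_ge_0).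
  assert (0 <= D * (sin_approx t 6 - sin t)) by (apply Rmult_le_pos; lra).
  assert (0 <= (cos_approx t 6 - cos t) * PL) by (apply Rmult_le_pos; lra).
  lra.
Qed.

Lemma regA_up t : 0 < t <= PI/2 ->
  0 < (1 + cos t) * ev2 PU2 t PI - PI^2 * ((PI^2 - t^2)^2 * (t - sin t)).
Proof.
  intros Ht. pose proof PIb. destruct (ev_QAU t PI) as [E1 E2].
  assert (HQ := pos_QAU t ltac:(lra)).
  assert (0 < t^5) by (apply pow_lt; lra).
  assert (HE : 0 < ev2 QAU_full t PI) by (rewrite E1; apply Rmult_lt_0_compat; lra).
  rewrite E2 in HE.
  pose proof (sinb t ltac:(lra)). pose proof (cosb t ltac:(lra)).
  pose proof (PU2_nonneg t ltac:(lra)).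
  set (D := (PI^2 - t^2)^2) in *. set (PU := ev2 PU2 t PI) in *.
  assert (0 <= PI^2 * D) by (unfold D; apply Rmult_le_pos; apply pow2_ge_0).
  assert (0 <= PI^2 * D * (sin t - sin_approx t 5)) by (apply Rmult_le_pos; lra).
  assert (0 <= (cos t - cos_approx t 5) * PU) by (apply Rmult_le_pos; lra).
  lra.
Qed.

Lemma regB_low t : PI/2 <= t < PI ->
  0 < (PI^2 - t^2)^2 * (t - sin t) - (1 + cos t) * ev2 PLq t PI.
Proof.
  intros Ht. pose proof PIb. set (s := PI - t).
  assert (Hs : 0 < s <= PI/2) by (unfold s; lra).
  replace t with (PI - s) by (unfold s; ring).
  rewrite sin_PI_x, Rtrigo_facts.cos_pi_minus.
  pose proof (pos_QBL s ltac:(lra)) as HQ. rewrite ev_QBL in HQ.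
  pose proof (ev_omcL s PI) as Ho.
  pose proof (sinb s ltac:(lra)). pose proof (cosb s ltac:(lra)).
  pose proof (PL_nonneg (PI - s) ltac:(lra)).
  set (PL := ev2 PLq (PI - s) PI) in *. set (K := ev2 (skipn 2 omcL) s PI) in *.
  assert (0 < s^2) by (apply pow_lt; lra).
  assert (HH1 : 0 < s^2 * ((2 * PI - s) ^ 2 * (PI - s - sin_approx s 6) - K * PL))
    by (apply Rmult_lt_0_compat; lra).
  replace ((PI ^ 2 - (PI - s) ^ 2) ^ 2) with (s^2 * (2*PI - s)^2) by ring.
  assert (0 <= s^2 * (2*PI - s)^2) by (apply Rmult_le_pos; apply pow2_ge_0).
  assert (0 <= s^2 * (2*PI - s)^2 * (sin_approx s 6 - sin s)) by (apply Rmult_le_pos; lra).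
  assert (0 <= (cos s - cos_approx s 5) * PL) by (apply Rmult_le_pos; lra).
  assert (s^2 * K = 1 - cos_approx s 5) by lra.
  nra.
Qed.

Lemma regB_up t : PI/2 <= t < PI ->
  0 < (1 + cos t) * ev2 PU2 t PI - PI^2 * ((PI^2 - t^2)^2 * (t - sin t)).
Proof.
  intros Ht. pose proof PIb. set (s := PI - t).
  assert (Hs : 0 < s <= PI/2) by (unfold s; lra).
  replace t with (PI - s) by (unfold s; ring).
  rewrite sin_PI_x, Rtrigo_facts.cos_pi_minus.
  pose proof (pos_QBU s ltac:(lra)) as HQ. destruct (ev_QBU s PI) as [E1 E2].
  pose proof (ev_omcU s PI) as Ho.
  pose proof (sinb s ltac:(lra)). pose proof (cosb s ltac:(lra)).
  pose proof (PU2_nonneg (PI - s) ltac:(lra)).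
  set (PU := ev2 PU2 (PI - s) PI) in *. set (K := ev2 (skipn 2 omcU) s PI) in *.
  assert (0 < s^3) by (apply pow_lt; lra).
  assert (HH1 : 0 < s^3 * ev2 (skipn 1 QBU_full) s PI) by (apply Rmult_lt_0_compat; lra).
  assert (HH2 : s^3 * ev2 (skipn 1 QBU_full) s PI = s^2 * (K * PU - PI ^ 2 * ((2 * PI - s) ^ 2 * (PI - s - sin_approx s 5)))).
  { rewrite <- E2. rewrite E1. ring. }
  replace ((PI ^ 2 - (PI - s) ^ 2) ^ 2) with (s^2 * (2*PI - s)^2) by ring.
  assert (0 <= PI^2 * (s^2 * (2*PI - s)^2)) by (apply Rmult_le_pos; [apply pow2_ge_0|apply Rmult_le_pos; apply pow2_ge_0]).
  assert (0 <= PI^2 * (s^2 * (2*PI - s)^2) * (sin s - sin_approx s 5)) by (apply Rmult_le_pos; lra).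
  assert (0 <= (cos_approx s 6 - cos s) * PU) by (apply Rmult_le_pos; lra).
  assert (s^2 * K = 1 - cos_approx s 6) by lra.
  nra.
Qed.

Lemma fsec_eq x : 0 < x < PI/2 ->
  fsec x = (2*x - sin (2*x)) / (1 + cos (2*x)) /\ 0 < 1 + cos (2*x).
Proof.
  intros Hx. assert (Hc : 0 < cos x) by (apply cos_gt_0; lra).
  rewrite sin_2a, cos_2a_cos. unfold fsec, tan. split; [field; nra | nra].
Qed.

Lemma bnd_eq c x : bnd c x = (PI^4*(2*x)^3/12 + c*(2*x)^5/32) / (PI^2 - (2*x)^2)^2.
Proof.
  unfold bnd. replace (PI ^ 2 - 4 * x ^ 2) with (PI^2 - (2*x)^2) by ring.
  f_equal. field.
Qed.

Lemma frac_lt a b c d : 0 < b -> 0 < d -> 0 < c*b - a*d -> a/b < c/d.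
Proof.
  intros Hb Hd H. assert (E : c/d - a/b = (c*b - a*d)/(b*d)) by (field; lra).
  cut (0 < c/d - a/b); [lra|]. rewrite E. apply Rdiv_lt_0_compat; nra.
Qed.
Lemma frac_le a b c d : 0 < b -> 0 < d -> 0 <= c*b - a*d -> a/b <= c/d.
Proof.
  intros Hb Hd H. assert (E : c/d - a/b = (c*b - a*d)/(b*d)) by (field; lra).
  cut (0 <= c/d - a/b); [lra|]. rewrite E. apply Rmult_le_pos; [lra|].
  apply Rlt_le, Rinv_0_lt_compat; nra.
Qed.

Lemma NL_eq t : PI^4*t^3/12 + c_low*t^5/32 = ev2 PLq t PI.
Proof. rewrite ev_PL. unfold c_low. ring. Qed.
Lemma NU_eq t : PI^2 * (PI^4*t^3/12 + c_up*t^5/32) = ev2 PU2 t PI.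
Proof. rewrite ev_PU2. unfold c_up. pose proof PI_RGT_0. field. lra. Qed.

Lemma part1 x : 0 < x < PI/2 -> bnd c_low x < fsec x < bnd c_up x.
Proof.
  intros Hx. destruct (fsec_eq x Hx) as [Ef HC]. rewrite Ef, !bnd_eq.
  set (t := 2 * x) in *. pose proof PIb.
  assert (Ht : 0 < t < PI) by (unfold t; lra).
  assert (HD : 0 < (PI^2 - t^2)^2) by (apply pow_lt; nra).
  split.
  - rewrite NL_eq. apply frac_lt; auto.
    destruct (Rle_dec t (PI/2)) as [H1|H1].
    + pose proof (regA_low t ltac:(lra)). lra.
    + pose proof (regB_low t ltac:(lra)). lra.
  - apply frac_lt; auto.
    assert (H0 : 0 < (1 + cos t) * ev2 PU2 t PI - PI^2 * ((PI^2 - t^2)^2 * (t - sin t))).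
    { destruct (Rle_dec t (PI/2)) as [H1|H1]; [apply regA_up | apply regB_up]; lra. }
    rewrite <- NU_eq in H0.
    assert (0 < PI^2) by nra.
    set (N := PI ^ 4 * t ^ 3 / 12 + c_up * t ^ 5 / 32) in *.
    assert (E : (1 + cos t) * (PI ^ 2 * N) - PI ^ 2 * ((PI ^ 2 - t ^ 2) ^ 2 * (t - sin t))
      = PI^2 * (N * (1 + cos t) - (t - sin t) * (PI ^ 2 - t ^ 2) ^ 2)) by ring.
    rewrite E in H0. nra.
Qed.

Lemma part2 c : c > c_low -> exists x : R, 0 < x < PI / 2 /\ ~ (bnd c x < fsec x).
Proof.
  intros Hc. pose proof PIb. set (d := c - c_low).
  assert (Hd : 0 < d) by (unfold d; lra).
  set (t := Rmin 1 (d/32)).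
  assert (Ht1 : 0 < t) by (unfold t; apply Rmin_glb_lt; lra).
  assert (Ht2 : t <= 1) by (unfold t; apply Rmin_l).
  assert (Ht3 : t <= d/32) by (unfold t; apply Rmin_r).
  exists (t/2). split; [lra|]. apply Rle_not_lt.
  destruct (fsec_eq (t/2) ltac:(lra)) as [Ef HC]. rewrite Ef, bnd_eq.
  replace (2 * (t/2)) with t in HC |- * by field.
  assert (HD : 0 < (PI^2 - t^2)^2) by (apply pow_lt; nra).
  apply frac_le; auto.
  destruct (ev_QALp t PI) as [E1 E2].
  pose proof (pos_QALp t ltac:(lra)) as HQ.
  rewrite ev2_sub, ev2_cst, Q2R1 in HQ.
  pose proof (sinb t ltac:(lra)). pose proof (cosb t ltac:(lra)).
  pose proof (PL_nonneg t ltac:(lra)).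
  assert (Hcos : 0 <= cos t) by (apply cos_ge_0; lra).
  replace c with (c_low + d) by (unfold d; ring).
  replace (PI ^ 4 * t ^ 3 / 12 + (c_low + d) * t ^ 5 / 32) with
    (ev2 PLq t PI + d * t^5/32) by (rewrite <- NL_eq; field).
  set (PL := ev2 PLq t PI) in *. set (D := (PI^2 - t^2)^2) in *.
  set (Q := ev2 (skipn 7 QALp_full) t PI) in *.
  assert (0 < t^7) by (apply pow_lt; lra).
  assert (HH : D * (t - sin t) - (1 + cos t) * PL <= t^7).
  { assert (HA : D * (t - sin t) - (1 + cos t) * PL <= ev2 QALp_full t PI).
    { rewrite E2. fold PL. fold D.
      assert (0 <= D * (sin t - sin_approx t 5)) by (apply Rmult_le_pos; lra).
      assert (0 <= (cos t - cos_approx t 5) * PL) by (apply Rmult_le_pos; lra).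
      lra. }
    rewrite E1 in HA. fold Q in HA. nra. }
  assert (0 < t^5) by (apply pow_lt; lra).
  assert (t^7 <= t^5 * d / 32).
  { replace (t^7) with (t^5 * (t*t)) by ring. assert (t * t <= d/32) by nra. nra. }
  assert (t^5 * d / 32 <= (1 + cos t) * (d * t^5/32)).
  { assert (0 <= cos t * (d * t^5/32)) by (apply Rmult_le_pos; nra). nra. }
  nra.
Qed.

Lemma part3 c : c < c_up -> exists x : R, 0 < x < PI / 2 /\ ~ (fsec x < bnd c x).
Proof.
  intros Hc. pose proof PIb. set (d := c_up - c).
  assert (Hd : 0 < d) by (unfold d; lra).
  set (s := Rmin 1 (d/8)).
  assert (Hs1 : 0 < s) by (unfold s; apply Rmin_glb_lt; lra).
  assert (Hs2 : s <= 1) by (unfold s; apply Rmin_l).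
  assert (Hs3 : s <= d/8) by (unfold s; apply Rmin_r).
  set (t := PI - s).
  exists (t/2). split; [unfold t; lra|]. apply Rle_not_lt.
  destruct (fsec_eq (t/2) ltac:(unfold t; lra)) as [Ef HC]. rewrite Ef, bnd_eq.
  replace (2 * (t/2)) with t in HC |- * by field.
  assert (HD : 0 < (PI^2 - t^2)^2) by (apply pow_lt; unfold t; nra).
  apply frac_le; auto.
  replace c with (c_up - d) by (unfold d; ring).
  set (NU := PI ^ 4 * t ^ 3 / 12 + c_up * t ^ 5 / 32).
  replace (PI ^ 4 * t ^ 3 / 12 + (c_up - d) * t ^ 5 / 32) with (NU - d * t^5/32) by (unfold NU; field).
  assert (HNU := NU_eq t). fold NU in HNU.
  assert (HH : PI^2 * (NU * (1 + cos t) - (t - sin t) * (PI^2 - t^2)^2) <= 12 * s^3).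
  { replace (PI^2 * (NU * (1 + cos t) - (t - sin t) * (PI^2 - t^2)^2)) with
      ((1 + cos t) * ev2 PU2 t PI - PI^2 * ((PI^2 - t^2)^2 * (t - sin t))) by (rewrite <- HNU; ring).
    unfold t. rewrite sin_PI_x, Rtrigo_facts.cos_pi_minus.
    pose proof (pos_QBUp s ltac:(lra)) as HQ. rewrite ev2_sub, ev2_cst in HQ.
    replace (Q2R 12) with 12 in HQ by (unfold Q2R; simpl; field).
    destruct (ev_QBUp s PI) as [E1 E2].
    pose proof (ev_omcL s PI) as Ho.
    pose proof (sinb s ltac:(lra)). pose proof (cosb s ltac:(lra)).
    pose proof (PU2_nonneg (PI - s) ltac:(lra)).
    set (PU := ev2 PU2 (PI - s) PI) in *. set (K := ev2 (skipn 2 omcL) s PI) in *.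
    set (Q := ev2 (skipn 1 QBUp_full) s PI) in *.
    assert (0 < s^3) by (apply pow_lt; lra).
    assert (HH2 : s^3 * Q = s^2 * (K * PU - PI ^ 2 * ((2 * PI - s) ^ 2 * (PI - s - sin_approx s 6)))).
    { rewrite <- E2. rewrite E1. ring. }
    replace ((PI ^ 2 - (PI - s) ^ 2) ^ 2) with (s^2 * (2*PI - s)^2) by ring.
    assert (0 <= PI^2 * (s^2 * (2*PI - s)^2)) by (apply Rmult_le_pos; [apply pow2_ge_0|apply Rmult_le_pos; apply pow2_ge_0]).
    assert (0 <= PI^2 * (s^2 * (2*PI - s)^2) * (sin_approx s 6 - sin s)) by (apply Rmult_le_pos; lra).
    assert (0 <= (cos s - cos_approx s 5) * PU) by (apply Rmult_le_pos; lra).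
    assert (s^2 * K = 1 - cos_approx s 5) by lra.
    assert (s^3 * Q <= 12 * s^3) by nra.
    nra. }
  assert (HC2 : s^2/4 <= 1 + cos t).
  { unfold t. rewrite Rtrigo_facts.cos_pi_minus.
    assert (Hcb := cos_bound s 0 ltac:(lra) ltac:(lra)).
    assert (E : cos_approx s (2*(0+1)) = 1 - s^2/2 + s^4/24)
      by (unfold cos_approx, cos_term; simpl; field).
    rewrite E in Hcb. assert (s*s <= 1) by nra. assert (s^4 <= s^2) by (replace (s^4) with (s^2 * (s*s)) by ring; assert (0 <= s^2) by nra; rewrite <- (Rmult_1_r (s^2)) at 2; apply Rmult_le_compat_l; lra). assert (0 <= s^2) by nra. lra. }
  assert (Ht5 : 32 <= t^5).
  { assert (2 <= t) by (unfold t; lra). replace 32 with (2^5) by ring.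
    apply pow_incr; lra. }
  assert (HP2 : 9 <= PI^2) by nra.
  assert (0 < s^2) by nra.
  assert (HR : 12 * s^3 <= PI^2 * (d * t^5/32 * (1 + cos t))).
  { assert (9 * (d * (s^2/4)) <= PI^2 * (d * t^5/32 * (1 + cos t))).
    { apply Rmult_le_compat; try nra.
      assert (0 <= d * (s^2/4)) by nra.
      assert (d * (s^2/4) <= d * (t^5/32) * (s^2/4)) by nra.
      assert (d * (t^5/32) * (s^2/4) <= d * (t^5/32) * (1 + cos t)).
      { apply Rmult_le_compat_l; nra. }
      nra. }
    nra. }
  assert (0 < PI^2) by nra.
  assert (HF : 0 <= PI^2 * ((t - sin t) * (PI ^ 2 - t ^ 2) ^ 2 - (NU - d * t ^ 5 / 32) * (1 + cos t))) by nra.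
  nra.
Qed.

Theorem mainTheorem20 :
  (forall x : R, 0 < x < PI / 2 ->
     bnd c_low x < fsec x < bnd c_up x) /\
  (forall c : R, c > c_low ->
     exists x : R, 0 < x < PI / 2 /\ ~ (bnd c x < fsec x)) /\
  (forall c : R, c < c_up ->
     exists x : R, 0 < x < PI / 2 /\ ~ (fsec x < bnd c x)).
Proof.
  split; [exact part1|]. split; [exact part2|exact part3].
Qed.
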